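(* Let $X,Y$ be Scott domains quantified, respectively, by partial metrics $p_X,p_Y$ with values in $[0,1]$, and let $(a_n)_{n\geq1}$ be an enumeration of a countable basis of $X$. Then for every $0<\theta\leq\frac12$, the domain $X\Rightarrow Y$ of Scott-continuous functions from $X$ to $Y$ (ordered pointwise) is quantified by the partial metric $$p^\theta_{X\Rightarrow Y}(f,g)=\sum_{n=1}^\infty\theta^n\,p_Y\big(f(a_n),g(a_n)\big).$$
   Context: A partial metric (PM) on $X$ is $p:X\times X\to[0,+\infty]$ with $p(x,x)\leq p(x,y)$; $p(x,x)=p(x,y)=p(y,y)\Rightarrow x=y$; $p(x,y)=p(y,x)$; $p(x,y)\leq p(x,z)+p(z,y)-p(z,z)$. Open balls $B^p_\epsilon(x)=\{y\mid p(y,x)<p(x,x)+\epsilon\}$; $\mathcal O_p(X)$ is the topology of unions of open balls. In a dcpo, $x\ll y$ iff every directed $\Delta$ with $y\leq\bigvee\Delta$ contains some $d\geq x$; a basis is $B\subseteq X$ with $\{b\in B\mid b\ll x\}$ directed with join $x$ for each $x$; $x$ is compact if $x\ll x$. A Scott domain is a dcpo with a countable basis of compact elements which is bounded complete (every finite subset with an upper bound has a join). Scott-continuous functions are monotone maps preserving joins of directed sets. The Scott topology $\mathcal O_\sigma(X)$ consists of upper sets $U$ with $x\in U\Rightarrow\exists y\ll x,\ y\in U$. A dcpo $X$ is quantified by $p$ if $\mathcal O_\sigma(X)=\mathcal O_p(X)$. *)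

(* Defs.v *)
From Stdlib Require Import Reals List.
From Coquelicot Require Import Coquelicot.
Open Scope R_scope.
Set Implicit Arguments.

Section Order.
Variable X : Type.
Variable le : X -> X -> Prop.

Definition is_partial_order : Prop :=
  (forall x, le x x) /\ (forall x y, le x y -> le y x -> x = y) /\
  (forall x y z, le x y -> le y z -> le x z).

Definition directed (D : X -> Prop) : Prop :=
  (exists d, D d) /\
  (forall x y, D x -> D y -> exists z, D z /\ le x z /\ le y z).

Definition is_lub (S : X -> Prop) (s : X) : Prop :=
  (forall x, S x -> le x s) /\ (forall u, (forall x, S x -> le x u) -> le s u).

Definition dcpo : Prop :=
  is_partial_order /\ forall D, directed D -> exists s, is_lub D s.

Definition way_below (x y : X) : Prop :=
  forall D s, directed D -> is_lub D s -> le y s -> exists d, D d /\ le x d.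

Definition compact (x : X) : Prop := way_below x x.

Definition is_basis (B : X -> Prop) : Prop :=
  forall x, directed (fun b => B b /\ way_below b x) /\
            is_lub (fun b => B b /\ way_below b x) x.

Definition countable_set (B : X -> Prop) : Prop :=
  exists f : X -> nat, forall x y, B x -> B y -> f x = f y -> x = y.

Definition bounded_complete : Prop :=
  forall l : list X, (exists u, forall x, In x l -> le x u) ->
    exists j, is_lub (fun x => In x l) j.

Definition scott_domain : Prop :=
  dcpo /\
  (exists B, countable_set B /\ (forall b, B b -> compact b) /\ is_basis B) /\
  bounded_complete.

Definition scott_open (U : X -> Prop) : Prop :=
  (forall x y, U x -> le x y -> U y) /\
  (forall x, U x -> exists y, way_below y x /\ U y).
End Order.

Section PMetric.
Variable X : Type.
Variable p : X -> X -> R.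

Definition is_partial_metric : Prop :=
  (forall x y, 0 <= p x y) /\
  (forall x y, p x x <= p x y) /\
  (forall x y, p x x = p x y -> p x y = p y y -> x = y) /\
  (forall x y, p x y = p y x) /\
  (forall x y z, p x y <= p x z + p z y - p z z).

Definition pball (x : X) (eps : R) (y : X) : Prop := p y x < p x x + eps.

Definition pm_open (U : X -> Prop) : Prop :=
  exists I : X * R -> Prop,
    (forall c, I c -> 0 < snd c) /\
    (forall y, U y <-> exists c, I c /\ pball (fst c) (snd c) y).
End PMetric.

Definition quantified (X : Type) (le : X -> X -> Prop) (p : X -> X -> R) : Prop :=
  is_partial_metric p /\ (forall U, scott_open le U <-> pm_open p U).

Definition scott_continuous (X Y : Type) (leX : X -> X -> Prop)
  (leY : Y -> Y -> Prop) (f : X -> Y) : Prop :=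
  (forall x y, leX x y -> leY (f x) (f y)) /\
  (forall D s, directed leX D -> is_lub leX D s ->
     is_lub leY (fun y => exists d, D d /\ f d = y) (f s)).

Definition cfun (X Y : Type) (leX : X -> X -> Prop) (leY : Y -> Y -> Prop) :=
  { f : X -> Y | scott_continuous leX leY f }.

Definition cfun_le (X Y : Type) (leX : X -> X -> Prop) (leY : Y -> Y -> Prop)
  (f g : cfun leX leY) : Prop :=
  forall x, leY (proj1_sig f x) (proj1_sig g x).

(* p^theta(f,g) = sum_{n>=1} theta^n pY(f(a_n), g(a_n)); here a is indexed from 0,
   a n standing for a_{n+1} *)
Definition p_theta (X Y : Type) (leX : X -> X -> Prop) (leY : Y -> Y -> Prop)
  (pY : Y -> Y -> R) (a : nat -> X) (theta : R) (f g : cfun leX leY) : R :=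
  Series (fun n => theta ^ (S n) * pY (proj1_sig f (a n)) (proj1_sig g (a n))).

(* Main.v *)
From Stdlib Require Import Reals Lra Lia List Classical ClassicalEpsilon FunctionalExtensionality ProofIrrelevance.
From Coquelicot Require Import Coquelicot.
Require Import Defs.
Open Scope R_scope.

Section OrderLemmas.
Variable T : Type.
Variable le : T -> T -> Prop.
Hypothesis Hpo : is_partial_order le.

Lemma po_refl x : le x x. Proof. apply Hpo. Qed.
Lemma po_antisym x y : le x y -> le y x -> x = y. Proof. apply Hpo. Qed.
Lemma po_trans x y z : le x y -> le y z -> le x z. Proof. apply Hpo. Qed.

Lemma single_directed y : directed le (fun z => z = y).
Proof. split. exists y; auto. intros x z -> ->. exists y; repeat split; auto; apply po_refl. Qed.

Lemma single_lub y : is_lub le (fun z => z = y) y.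
Proof. split. intros x ->; apply po_refl. intros u H; apply H; auto. Qed.

Lemma wb_le x y : way_below le x y -> le x y.
Proof.
  intros H. destruct (H _ _ (single_directed y) (single_lub y) (po_refl y)) as [d [-> Hd]]; auto.
Qed.

Lemma compact_wb c y : compact le c -> le c y -> way_below le c y.
Proof.
  intros Hc Hcy D s HD Hs Hys. apply Hc with s; auto. eapply po_trans; eauto.
Qed.

Lemma lub_unique S x y : is_lub le S x -> is_lub le S y -> x = y.
Proof.
  intros [H1 H2] [H3 H4]. apply po_antisym; [apply H2|apply H4]; auto.
Qed.

Lemma compact_in_basis B b : is_basis le B -> compact le b -> B b.
Proof.
  intros HB Hb. destruct (HB b) as [Hd Hl].
  destruct (Hb _ _ Hd Hl (po_refl b)) as [d [[HBd Hdb] Hbd]].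
  apply wb_le in Hdb. rewrite (po_antisym _ _ Hbd Hdb). auto.
Qed.

Lemma scott_open_lub U D s : scott_open le U -> directed le D -> is_lub le D s -> U s ->
  exists d, D d /\ U d.
Proof.
  intros [Hup Hwb] HD Hs HU. destruct (Hwb _ HU) as [y [Hy HUy]].
  destruct (Hy D s HD Hs (po_refl s)) as [d [Hd Hyd]]. exists d; split; auto. eapply Hup; eauto.
Qed.
End OrderLemmas.

Lemma image_directed (X Y : Type) (leX : X -> X -> Prop) (leY : Y -> Y -> Prop) (f : X -> Y) D :
  (forall x y, leX x y -> leY (f x) (f y)) -> directed leX D ->
  directed leY (fun y => exists d, D d /\ f d = y).
Proof.
  intros Hm [[d Hd] H2]. split. exists (f d); eauto.
  intros x y [dx [Hx <-]] [dy [Hy <-]]. destruct (H2 _ _ Hx Hy) as [z [Hz [H1 H3]]].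
  exists (f z); repeat split; eauto.
Qed.

Section PMLemmas.
Variable T : Type.
Variable p : T -> T -> R.
Hypothesis Hp : is_partial_metric p.

Lemma pm_sym x y : p x y = p y x. Proof. apply Hp. Qed.
Lemma pm_tri x y z : p x y <= p x z + p z y - p z z. Proof. apply Hp. Qed.
Lemma pm_small x y : p x x <= p x y. Proof. apply Hp. Qed.
Lemma pm_sep x y : p x x = p x y -> p x y = p y y -> x = y. Proof. apply Hp. Qed.

Lemma pm_open_nbhd U y : pm_open p U -> U y ->
  exists d, 0 < d /\ forall y', p y' y < p y y + d -> U y'.
Proof.
  intros [I [HI HU]] Hy. destruct (proj1 (HU y) Hy) as [[z r] [Hc Hb]].
  unfold pball in Hb; simpl in *. exists (p z z + r - p y z); split. lra.
  intros y' Hy'. apply HU. exists (z, r); split; auto. unfold pball; simpl.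
  pose proof (pm_tri y' z y). rewrite (pm_sym y z) in *. lra.
Qed.

Lemma pm_open_of U : (forall y, U y -> exists d, 0 < d /\ forall y', p y' y < p y y + d -> U y') ->
  pm_open p U.
Proof.
  intros H. exists (fun c => 0 < snd c /\ forall y', pball p (fst c) (snd c) y' -> U y').
  split. intros c [? ?]; auto.
  intros y; split.
  - intros Hy. destruct (H y Hy) as [d [Hd Hd']]. exists (y, d); simpl; repeat split; auto.
    unfold pball; lra.
  - intros [c [[_ Hc] Hb]]. auto.
Qed.

Lemma ball_open z r : pm_open p (fun y => p y z < r).
Proof.
  apply pm_open_of. intros y Hy. exists (r - p y z); split. lra.
  intros y' Hy'. pose proof (pm_tri y' z y). lra.
Qed.
End PMLemmas.

Lemma q_antitone (T : Type) (le : T -> T -> Prop) (p : T -> T -> R) :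
  quantified le p -> forall y y' z, le y y' -> p y' z <= p y z.
Proof.
  intros [Hp Hq] y y' z Hle.
  assert (p y' y <= p y y).
  { destruct (Rle_or_lt (p y' y) (p y y)) as [|Hlt]; auto.
    assert (Ho : scott_open le (fun w => p w y < p y' y)).
    { apply Hq. apply ball_open with (T:=T); auto. }
    destruct Ho as [Hup _]. specialize (Hup y y'). assert (p y' y < p y' y) by (apply Hup; auto).
    lra. }
  pose proof (pm_tri _ _ Hp y' z y). lra.
Qed.
Lemma ex_geomS th : 0 < th < 1 -> ex_series (fun n => th ^ (S n)).
Proof.
  intros Hth. assert (H := is_series_geom th). 
  assert (Rabs th < 1) by (rewrite Rabs_right; lra).
  apply (ex_series_ext (fun n => scal th (th ^ n))). intros n; reflexivity.
  apply (@ex_series_scal_l R_AbsRing R_NormedModule th (fun n => th ^ n)). eexists; apply H; auto.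
Qed.

Lemma ser_geomS th : 0 < th < 1 -> Series (fun n => th ^ (S n)) = th / (1 - th).
Proof.
  intros Hth. assert (Rabs th < 1) by (rewrite Rabs_right; lra).
  rewrite (Series_ext _ (fun n => th * th ^ n)) by reflexivity.
  rewrite Series_scal_l. rewrite (is_series_unique (pow th) _ (is_series_geom th H)). field. lra.
Qed.

Lemma ser_ex th t K : 0 < th < 1 -> (forall n, Rabs (t n) <= K) ->
  ex_series (fun n => th ^ (S n) * t n).
Proof.
  intros Hth Ht. apply (@ex_series_le R_AbsRing R_CompleteNormedModule _ (fun n => K * th ^ (S n))).
  - intros n. change (norm (th ^ S n * t n)) with (Rabs (th ^ S n * t n)).
    rewrite Rabs_mult, Rabs_right. rewrite Rmult_comm. apply Rmult_le_compat_r.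
    left; apply pow_lt; lra. auto. left; apply pow_lt; lra.
  - apply (ex_series_ext (fun n => scal K (th ^ S n))). reflexivity.
    apply (@ex_series_scal_l R_AbsRing R_NormedModule K (fun n => th ^ S n)), ex_geomS; auto.
Qed.

Lemma ser_ex_minus a b : ex_series a -> ex_series b -> ex_series (fun n => a n - b n).
Proof.
  intros Ha Hb. apply (ex_series_ext (fun n => plus (a n) (opp (b n)))). reflexivity.
  apply ex_series_minus; auto.
Qed.

Lemma ser_ex_plus a b : ex_series a -> ex_series b -> ex_series (fun n => a n + b n).
Proof.
  intros Ha Hb. apply (ex_series_ext (fun n => plus (a n) (b n))). reflexivity.
  apply ex_series_plus; auto.
Qed.

Lemma ser_nonneg a : (forall k, 0 <= a k) -> ex_series a -> 0 <= Series a.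
Proof.
  intros H Ha. replace 0 with (Series (fun n => 0 * a n)).
  apply Series_le; auto. intros; split; [lra|rewrite Rmult_0_l; auto].
  rewrite Series_scal_l; ring.
Qed.

Lemma ser_le a b : (forall n, a n <= b n) -> ex_series a -> ex_series b -> Series a <= Series b.
Proof.
  intros H Ha Hb. assert (0 <= Series (fun n => b n - a n)).
  { apply ser_nonneg. intros k; specialize (H k); lra. apply ser_ex_minus; auto. }
  rewrite Series_minus in H0; auto. lra.
Qed.

Lemma ser_term a n : (forall k, 0 <= a k) -> ex_series a -> a n <= Series a.
Proof.
  intros H Ha. rewrite (Series_incr_n a (S n)) by (auto with arith).
  simpl pred. assert (0 <= Series (fun k => a (S n + k)%nat)).
  { apply ser_nonneg. auto. apply ex_series_incr_n with (n := S n) in Ha; auto. }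
  assert (a n <= sum_f_R0 a n).
  { destruct n. simpl; lra. simpl. assert (0 <= sum_f_R0 a n).
    { apply cond_pos_sum; auto. } lra. }
  lra.
Qed.

Lemma is_lub_ext (T : Type) (le : T -> T -> Prop) (S S' : T -> Prop) x :
  (forall y, S y <-> S' y) -> is_lub le S x -> is_lub le S' x.
Proof.
  intros H [H1 H2]. split. intros y Hy; apply H1, H; auto.
  intros u Hu. apply H2. intros y Hy; apply Hu, H; auto.
Qed.

Section Main.
Variables X Y : Type.
Variable leX : X -> X -> Prop.
Variable leY : Y -> Y -> Prop.
Variable pY : Y -> Y -> R.
Variable a : nat -> X.
Variable B BX : X -> Prop.
Variable BY : Y -> Prop.
Variable theta : R.
Hypothesis poX : is_partial_order leX.
Hypothesis poY : is_partial_order leY.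
Hypothesis dcpoY : forall D, directed leY D -> exists s, is_lub leY D s.
Hypothesis bcY : bounded_complete leY.
Hypothesis HBXc : forall b, BX b -> compact leX b.
Hypothesis HBX : is_basis leX BX.
Hypothesis HBYc : forall b, BY b -> compact leY b.
Hypothesis HBY : is_basis leY BY.
Hypothesis HqY : quantified leY pY.
Hypothesis HpY01 : forall y y', 0 <= pY y y' <= 1.
Hypothesis HB : is_basis leX B.
Hypothesis Hsurj : forall b, B b -> exists n, a n = b.
Hypothesis Hth : 0 < theta <= 1/2.

Notation F := (cfun leX leY).
Notation fv f := (proj1_sig f).
Notation cle := (@cfun_le X Y leX leY).

Lemma cmono (f : F) x y : leX x y -> leY (fv f x) (fv f y).
Proof. apply (proj1 (proj2_sig f)). Qed.

Lemma club (f : F) D s : directed leX D -> is_lub leX D s ->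
  is_lub leY (fun y => exists d, D d /\ fv f d = y) (fv f s).
Proof. apply (proj2 (proj2_sig f)). Qed.

Lemma cfun_ext (f g : F) : (forall x, fv f x = fv g x) -> f = g.
Proof.
  destruct f as [f Hf], g as [g Hg]; simpl. intros H.
  assert (f = g) by (apply functional_extensionality; auto). subst.
  f_equal. apply proof_irrelevance.
Qed.

Lemma cle_po : is_partial_order cle.
Proof.
  unfold cfun_le. split; [|split].
  - intros f x; apply po_refl; auto.
  - intros f g H1 H2. apply cfun_ext. intros x; apply (po_antisym _ _ poY); auto.
  - intros f g h H1 H2 x. eapply (po_trans _ _ poY); eauto.
Qed.

Definition SL (l : list (X * Y)) (x : X) (y : Y) : Prop :=
  exists b, In (b, y) l /\ leX b x.

Lemma SL_list l x : exists l', forall y, In y l' <-> SL l x y.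
Proof.
  induction l as [|[b c] l IH].
  - exists nil. intros y; split; [intros []|intros [b [[] _]]].
  - destruct IH as [l' Hl']. destruct (classic (leX b x)) as [Hb|Hb].
    + exists (c :: l'). intros y; split.
      * intros [<-|Hy]. exists b; split; auto. left; auto.
        destruct (proj1 (Hl' y) Hy) as [b' [H1 H2]]. exists b'; split; auto. right; auto.
      * intros [b' [[E|H1] H2]]. inversion E; subst; left; auto.
        right; apply Hl'; exists b'; auto.
    + exists l'. intros y; split.
      * intros Hy. destruct (proj1 (Hl' y) Hy) as [b' [H1 H2]]. exists b'; split; auto. right; auto.
      * intros [b' [[E|H1] H2]]. inversion E; subst; tauto.
        apply Hl'; exists b'; auto.
Qed.

Lemma SJ (g : F) (l : list (X * Y)) :
  (forall b c, In (b, c) l -> compact leX b /\ leY c (fv g b)) ->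
  exists h : F, forall x, is_lub leY (SL l x) (fv h x).
Proof.
  intros Hl.
  assert (Hex : forall x, exists j, is_lub leY (SL l x) j).
  { intros x. destruct (SL_list l x) as [l' Hl'].
    destruct (bcY l') as [j Hj].
    - exists (fv g x). intros y Hy. destruct (proj1 (Hl' y) Hy) as [b [H1 H2]].
      eapply (po_trans _ _ poY). apply (Hl _ _ H1). apply cmono; auto.
    - exists j. eapply is_lub_ext; [|exact Hj]. auto. }
  set (H := fun x => proj1_sig (constructive_indefinite_description _ (Hex x))).
  assert (HH : forall x, is_lub leY (SL l x) (H x)).
  { intros x. unfold H. destruct (constructive_indefinite_description _ (Hex x)); auto. }
  assert (Hmono : forall x y, leX x y -> leY (H x) (H y)).
  { intros x y Hxy. apply (HH x). intros z [b [H1 H2]]. apply (HH y).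
    exists b; split; auto. eapply (po_trans _ _ poX); eauto. }
  assert (Hc : scott_continuous leX leY H).
  { split; auto. intros D s HD Hs. split.
    - intros y [d [Hd <-]]. apply Hmono. apply Hs; auto.
    - intros u Hu. apply (HH s). intros y [b [H1 H2]].
      destruct (proj1 (Hl _ _ H1)  D s HD Hs H2) as [d [Hd Hbd]].
      eapply (po_trans _ _ poY). apply (HH d). exists b; split; eauto.
      apply Hu. exists d; auto. }
  exists (exist _ H Hc). simpl. auto.
Qed.

Lemma ev_directed D x : directed cle D -> directed leY (fun y => exists d, D d /\ fv d x = y).
Proof.
  intros HD. apply (image_directed _ _ cle leY (fun d => fv d x)); auto.
Qed.

Lemma PL D : directed cle D -> exists t : F, forall x,
  is_lub leY (fun y => exists d, D d /\ fv d x = y) (fv t x).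
Proof.
  intros HD.
  assert (Hex : forall x, exists j, is_lub leY (fun y => exists d, D d /\ fv d x = y) j).
  { intros x. apply dcpoY. apply ev_directed; auto. }
  set (H := fun x => proj1_sig (constructive_indefinite_description _ (Hex x))).
  assert (HH : forall x, is_lub leY (fun y => exists d, D d /\ fv d x = y) (H x)).
  { intros x. unfold H. destruct (constructive_indefinite_description _ (Hex x)); auto. }
  assert (Hmono : forall x y, leX x y -> leY (H x) (H y)).
  { intros x y Hxy. apply (HH x). intros z [d [Hd <-]].
    eapply (po_trans _ _ poY). apply cmono; eauto. apply (HH y). exists d; auto. }
  assert (Hc : scott_continuous leX leY H).
  { split; auto. intros S s HS Hs. split.
    - intros y [d [Hd <-]]. apply Hmono. apply Hs; auto.
    - intros u Hu. apply (HH s). intros y [d [Hd <-]].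
      apply (club d S s HS Hs). intros z [e [He <-]].
      eapply (po_trans _ _ poY). apply (HH e). exists d; auto.
      apply Hu. exists e; auto. }
  exists (exist _ H Hc). simpl. auto.
Qed.

Lemma cfun_lub_pw D s x : directed cle D -> is_lub cle D s ->
  is_lub leY (fun y => exists d, D d /\ fv d x = y) (fv s x).
Proof.
  intros HD Hs. destruct (PL D HD) as [t Ht]. split.
  - intros y [d [Hd <-]]. apply Hs; auto.
  - intros u Hu. eapply (po_trans _ _ poY). 2: apply (Ht x); auto.
    apply Hs. intros d Hd z. apply (Ht z). exists d; auto.
Qed.

Lemma wb_step (g h : F) (l : list (X * Y)) :
  (forall b c, In (b, c) l -> compact leY c /\ leY c (fv g b)) ->
  (forall x, is_lub leY (SL l x) (fv h x)) -> way_below cle h g.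
Proof.
  intros Hl Hh D s HD Hs Hgs.
  assert (Hd : exists d, D d /\ forall b c, In (b, c) l -> leY c (fv d b)).
  { clear Hh. induction l as [|[b c] l IH].
    - destruct (proj1 HD) as [d Hd]. exists d; split; auto. intros b c [].
    - destruct IH as [d2 [Hd2 H2]]. intros; apply Hl; right; auto.
      destruct (Hl b c (or_introl eq_refl)) as [Hcc Hcg].
      destruct (Hcc _ _ (ev_directed D b HD) (cfun_lub_pw D s b HD Hs))
        as [y [[d1 [Hd1 <-]] Hc1]].
      { eapply (po_trans _ _ poY); eauto. }
      destruct (proj2 HD _ _ Hd1 Hd2) as [d3 [Hd3 [H13 H23]]].
      exists d3; split; auto. intros b' c' [E|Hin].
      + inversion E; subst. eapply (po_trans _ _ poY); eauto.
      + eapply (po_trans _ _ poY); eauto. }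
  destruct Hd as [d [Hd Hdl]]. exists d; split; auto.
  intros x. apply (Hh x). intros y [b [H1 H2]].
  eapply (po_trans _ _ poY). apply (Hdl _ _ H1). apply cmono; auto.
Qed.

Lemma exR_ext (u v : nat -> R) : (forall n, u n = v n) -> ex_series u -> ex_series v.
Proof. apply (@ex_series_ext R_AbsRing R_NormedModule). Qed.

Definition P (f g : F) : R := p_theta pY a theta f g.
Definition tm (f g : F) n := pY (fv f (a n)) (fv g (a n)).

Lemma th1 : 0 < theta < 1. Proof. lra. Qed.

Lemma P_ex f g : ex_series (fun n => theta ^ S n * tm f g n).
Proof.
  apply ser_ex with (K := 1). apply th1. intros n. unfold tm.
  destruct (HpY01 (fv f (a n)) (fv g (a n))). rewrite Rabs_right; lra.
Qed.

Lemma P_eq f g : P f g = Series (fun n => theta ^ S n * tm f g n).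
Proof. reflexivity. Qed.

Lemma thpos n : 0 < theta ^ n. Proof. apply pow_lt; lra. Qed.

Lemma P_diff f g : P g f - P f f = Series (fun n => theta ^ S n * (tm g f n - tm f f n)).
Proof.
  rewrite !P_eq, <- Series_minus by apply P_ex. apply Series_ext. intros; ring.
Qed.

Lemma HpY : is_partial_metric pY. Proof. apply HqY. Qed.

Lemma P_term f g n : theta ^ S n * (tm g f n - tm f f n) <= P g f - P f f.
Proof.
  rewrite P_diff. apply (ser_term (fun n => theta ^ S n * (tm g f n - tm f f n))).
  - intros k. apply Rmult_le_pos. left; apply thpos. unfold tm.
    rewrite (pm_sym _ _ HpY (fv g (a k))). pose proof (pm_small _ _ HpY (fv f (a k)) (fv g (a k))). lra.
  - apply (exR_ext (fun n => theta ^ S n * tm g f n - theta ^ S n * tm f f n)).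
    intros; ring. apply ser_ex_minus; apply P_ex.
Qed.

Lemma P_antitone g g' f : cle g g' -> P g' f <= P g f.
Proof.
  intros H. rewrite !P_eq. apply ser_le; try apply P_ex. intros n.
  apply Rmult_le_compat_l. left; apply thpos. unfold tm. apply (q_antitone _ _ _ HqY). apply H.
Qed.

Lemma P_small f g : P f f <= P f g.
Proof.
  rewrite !P_eq. apply ser_le; try apply P_ex. intros n.
  apply Rmult_le_compat_l. left; apply thpos. unfold tm. apply (pm_small _ _ HpY).
Qed.

Lemma P_sym f g : P f g = P g f.
Proof. rewrite !P_eq. apply Series_ext. intros n. unfold tm. rewrite (pm_sym _ _ HpY). auto. Qed.

Lemma P_zero_tm f g : P f f = P f g -> forall n, tm f f n = tm g f n.
Proof.
  intros H n. pose proof (P_term f g n). rewrite (P_sym g f) in H0.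
  assert (tm f f n <= tm g f n).
  { unfold tm. rewrite (pm_sym _ _ HpY (fv g (a n))). apply (pm_small _ _ HpY). }
  assert (theta ^ S n * (tm g f n - tm f f n) <= 0) by lra.
  pose proof (thpos (S n)).
  destruct (Req_dec (tm f f n) (tm g f n)); auto.
  assert (0 < theta ^ S n * (tm g f n - tm f f n)) by (apply Rmult_lt_0_compat; lra). lra.
Qed.

Lemma eq_on_basis (f g : F) : (forall n, fv f (a n) = fv g (a n)) -> f = g.
Proof.
  intros H. apply cfun_ext. intros x. destruct (HBX x) as [Hd Hl].
  apply (lub_unique _ _ poY (fun y => exists d, (BX d /\ way_below leX d x) /\ fv f d = y)).
  - apply club; auto.
  - eapply is_lub_ext; [|apply club; eauto]. intros y; split; intros [d [Hd' E]]; exists d; split; auto.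
    + rewrite <- E. assert (Bd : B d) by (apply (compact_in_basis _ _ poX); auto; apply HBXc, Hd').
      destruct (Hsurj d Bd) as [n <-]. auto.
    + rewrite <- E. assert (Bd : B d) by (apply (compact_in_basis _ _ poX); auto; apply HBXc, Hd').
      destruct (Hsurj d Bd) as [n <-]. auto.
Qed.

Lemma P_pm : is_partial_metric P.
Proof.
  split; [|split; [|split; [|split]]].
  - intros f g. rewrite P_eq. apply ser_nonneg. intros n. apply Rmult_le_pos. left; apply thpos.
    apply HpY01. apply P_ex.
  - apply P_small.
  - intros f g H1 H2. apply eq_on_basis. intros n.
    pose proof (P_zero_tm f g H1 n). rewrite (P_sym f g) in H2. pose proof (P_zero_tm g f (eq_sym H2) n).
    unfold tm in *. apply (pm_sep _ _ HpY). rewrite (pm_sym _ _ HpY (fv f (a n)) (fv g (a n))); auto. auto.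
  - apply P_sym.
  - intros f g h. rewrite !P_eq.
    rewrite <- Series_plus, <- Series_minus by (try apply ser_ex_plus; apply P_ex).
    apply ser_le. intros n. unfold tm. pose proof (pm_tri _ _ HpY (fv f (a n)) (fv g (a n)) (fv h (a n))).
    pose proof (thpos (S n)). nra. apply P_ex.
    apply ser_ex_minus. apply ser_ex_plus; apply P_ex. apply P_ex.
Qed.

Lemma compact_nbhd c y0 : compact leY c -> leY c y0 ->
  exists d, 0 < d /\ forall y, pY y y0 < pY y0 y0 + d -> leY c y.
Proof.
  intros Hc Hcy. apply (pm_open_nbhd _ _ HpY (fun y => leY c y)); auto.
  apply (proj2 HqY). split.
  - intros x y H1 H2. eapply (po_trans _ _ poY); eauto.
  - intros x Hx. exists c. split; auto. apply (compact_wb _ _ poY); auto. apply (po_refl _ _ poY).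
Qed.

Definition valid (f : F) (l : list (X * Y)) :=
  forall b c, In (b, c) l -> compact leX b /\ compact leY c /\ leY c (fv f b).

Lemma eps_list f l : valid f l -> exists e, 0 < e /\
  forall g, P g f < P f f + e -> forall b c, In (b, c) l -> leY c (fv g b).
Proof.
  induction l as [|[b c] l IH]; intros Hv.
  - exists 1; split. lra. intros g _ b c [].
  - destruct IH as [e1 [He1 H1]]. intros b' c' Hin; apply Hv; right; auto.
    destruct (Hv b c (or_introl eq_refl)) as [Hb [Hc Hcf]].
    assert (Bb : B b) by (apply (compact_in_basis _ _ poX); auto).
    destruct (Hsurj b Bb) as [n En].
    destruct (compact_nbhd c (fv f b) Hc Hcf) as [d [Hd Hdc]].
    exists (Rmin e1 (theta ^ S n * d)). split.
    { apply Rmin_glb_lt; auto. apply Rmult_lt_0_compat; auto. apply thpos. }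
    intros g Hg b' c' [E|Hin].
    + inversion E; subst b' c'. apply Hdc. pose proof (P_term f g n).
      pose proof (Rmin_r e1 (theta ^ S n * d)). pose proof (thpos (S n)).
      unfold tm in H. rewrite En in H.
      assert (theta ^ S n * (pY (fv g b) (fv f b) - pY (fv f b) (fv f b)) < theta ^ S n * d) by lra.
      apply Rmult_lt_reg_l in H3; auto. lra.
    + apply H1; auto. pose proof (Rmin_l e1 (theta ^ S n * d)). lra.
Qed.

Lemma nbhdA U f : scott_open cle U -> U f ->
  exists e, 0 < e /\ forall g, P g f < P f f + e -> U g.
Proof.
  intros HU Hf. destruct HU as [Hup Hwb]. destruct (Hwb f Hf) as [k [Hk HUk]].
  set (DA := fun h : F => exists l, valid f l /\ forall x, is_lub leY (SL l x) (fv h x)).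
  assert (Hval : forall l, valid f l -> exists h : F, forall x, is_lub leY (SL l x) (fv h x)).
  { intros l Hl. apply (SJ f l). intros b c Hin; destruct (Hl b c Hin) as [? [? ?]]; auto. }
  assert (HDA : directed cle DA).
  { split.
    - destruct (Hval nil) as [h Hh]. intros b c []. exists h, nil. split; auto. intros b c [].
    - intros h1 h2 [l1 [V1 L1]] [l2 [V2 L2]].
      assert (V3 : valid f (l1 ++ l2)).
      { intros b c Hin. apply in_app_or in Hin. destruct Hin; auto. }
      destruct (Hval _ V3) as [h3 H3]. exists h3. split; [exists (l1 ++ l2); auto|].
      split; intros x.
      + apply (L1 x). intros y [b [Hin Hb]]. apply (H3 x). exists b; split; auto. apply in_or_app; auto.
      + apply (L2 x). intros y [b [Hin Hb]]. apply (H3 x). exists b; split; auto. apply in_or_app; auto. }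
  assert (HlubA : is_lub cle DA f).
  { split.
    - intros h [l [V L]] x. apply (L x). intros y [b [Hin Hb]].
      destruct (V b y Hin) as [_ [_ Hyf]]. eapply (po_trans _ _ poY); eauto. apply cmono; auto.
    - intros u Hu x. destruct (HBX x) as [Hd Hl].
      apply (club f _ _ Hd Hl). intros y [b [[BXb Hbx] <-]].
      destruct (HBY (fv f b)) as [Hd' Hl']. apply Hl'. intros c [BYc Hcb].
      assert (V : valid f ((b, c) :: nil)).
      { intros b' c' [E|[]]. inversion E; subst. repeat split; auto. apply (wb_le _ _ poY); auto. }
      destruct (Hval _ V) as [h Hh].
      eapply (po_trans _ _ poY). 2: apply (Hu h); exists ((b, c) :: nil); auto.
      apply (Hh x). exists b; split. left; auto. apply (wb_le _ _ poX); auto. }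
  destruct (Hk DA f HDA HlubA (po_refl _ _ cle_po f)) as [d [[l [V L]] Hkd]].
  assert (HUd : U d) by (eapply Hup; eauto).
  destruct (eps_list f l V) as [e [He He']]. exists e; split; auto.
  intros g Hg. apply Hup with d; auto. intros x. apply (L x). intros y [b [Hin Hb]].
  eapply (po_trans _ _ poY). apply (He' g Hg b y Hin). apply cmono; auto.
Qed.

Lemma point_lemma (g : F) x O : scott_open leY O -> O (fv g x) ->
  exists b c, compact leX b /\ compact leY c /\ leY c (fv g b) /\ leX b x /\ O c.
Proof.
  intros HO Hx. destruct (HBX x) as [Hd Hl].
  destruct (scott_open_lub _ _ poY O _ _ HO (image_directed _ _ leX leY (fv g) _ (cmono g) Hd)
    (club g _ _ Hd Hl) Hx) as [y [[b [[BXb Hbx] <-]] Hb]].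
  destruct (HBY (fv g b)) as [Hd' Hl'].
  destruct (scott_open_lub _ _ poY O _ _ HO Hd' Hl' Hb) as [c [[BYc Hcb] Hc]].
  exists b, c. repeat split; auto. apply (wb_le _ _ poY); auto. apply (wb_le _ _ poX); auto.
Qed.

Lemma list_N (g f : F) eta N : 0 < eta -> exists l, valid g l /\ forall n, (n < N)%nat ->
  exists b c, In (b, c) l /\ leX b (a n) /\ pY c (fv f (a n)) < pY (fv g (a n)) (fv f (a n)) + eta / 3.
Proof.
  intros Heta. induction N as [|N IH].
  - exists nil. split. intros b c []. intros n Hn; lia.
  - destruct IH as [l [V L]].
    assert (HO : scott_open leY (fun y => pY y (fv f (a N)) < pY (fv g (a N)) (fv f (a N)) + eta / 3)).
    { apply (proj2 HqY). apply (ball_open _ _ HpY). }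
    destruct (point_lemma g (a N) _ HO) as [b [c [Hb [Hc [Hcg [HbN HOc]]]]]]. simpl; lra.
    exists ((b, c) :: l). split.
    + intros b' c' [E|Hin]. inversion E; subst; auto. apply V; auto.
    + intros n Hn. destruct (Nat.eq_dec n N) as [->|Hne].
      * exists b, c. repeat split; auto. left; auto.
      * destruct (L n) as [b' [c' [H1 [H2 H3]]]]. lia. exists b', c'. repeat split; auto. right; auto.
Qed.

Lemma pow23 N n : (N <= S n)%nat -> (2/3) ^ S n <= (2/3) ^ N.
Proof.
  intros H. replace (S n) with (N + (S n - N))%nat by lia. rewrite pow_add.
  assert (0 <= (2/3) ^ (S n - N) <= 1).
  { split. apply pow_le; lra. rewrite <- (pow1 (S n - N)). apply pow_incr; lra. }
  assert (0 < (2/3) ^ N) by (apply pow_lt; lra). nra.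
Qed.

Lemma B2 f g e : P g f < P f f + e -> exists h, way_below cle h g /\ P h f < P f f + e.
Proof.
  intros Hg. set (eta := P f f + e - P g f). assert (Heta : 0 < eta) by (unfold eta; lra).
  destruct (pow_lt_1_zero (2/3)) with (y := eta / 9) as [N HN].
  { rewrite Rabs_right; lra. } lra.
  specialize (HN N (le_n N)). rewrite Rabs_right in HN by (left; apply pow_lt; lra).
  destruct (list_N g f eta N Heta) as [l [V L]].
  destruct (SJ g l) as [h Hh]. { intros b c Hin; destruct (V b c Hin) as [? [? ?]]; auto. }
  exists h. split.
  { apply (wb_step g h l); auto. intros b c Hin; destruct (V b c Hin) as [? [? ?]]; auto. }
  assert (Hbound : forall n, theta ^ S n * (tm h f n - tm g f n) <=
     eta / 3 * theta ^ S n + (2/3) ^ N * (3/4) ^ S n).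
  { intros n. pose proof (thpos (S n)). assert (0 < (2/3) ^ N) by (apply pow_lt; lra).
    assert (0 < (3/4) ^ S n) by (apply pow_lt; lra).
    destruct (Compare_dec.lt_dec n N) as [Hn|Hn].
    - destruct (L n Hn) as [b [c [Hin [Hb Hc]]]].
      assert (leY c (fv h (a n))) by (apply (Hh (a n)); exists b; auto).
      pose proof (q_antitone _ _ _ HqY _ _ (fv f (a n)) H2). unfold tm.
      assert (pY (fv h (a n)) (fv f (a n)) - pY (fv g (a n)) (fv f (a n)) <= eta / 3) by lra.
      assert (0 < (2/3) ^ N * (3/4) ^ S n) by (apply Rmult_lt_0_compat; auto).
      nra.
    - unfold tm. destruct (HpY01 (fv h (a n)) (fv f (a n))). destruct (HpY01 (fv g (a n)) (fv f (a n))).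
      assert (theta ^ S n <= (1/2) ^ S n) by (apply pow_incr; lra).
      assert ((1/2) ^ S n = (2/3) ^ S n * (3/4) ^ S n).
      { rewrite <- Rpow_mult_distr. f_equal. field. }
      pose proof (pow23 N n ltac:(lia)).
      assert ((2/3) ^ S n * (3/4) ^ S n <= (2/3) ^ N * (3/4) ^ S n) by nra.
      assert (0 <= eta / 3 * theta ^ S n) by nra.
      nra. }
  assert (Hdiff : P h f - P g f = Series (fun n => theta ^ S n * (tm h f n - tm g f n))).
  { rewrite !P_eq, <- Series_minus by apply P_ex. apply Series_ext. intros; ring. }
  assert (Hser : Series (fun n => theta ^ S n * (tm h f n - tm g f n)) <=
     Series (fun n => eta / 3 * theta ^ S n + (2/3) ^ N * (3/4) ^ S n)).
  { apply ser_le; auto.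
    - apply (exR_ext (fun n => theta ^ S n * tm h f n - theta ^ S n * tm g f n)). intros; ring.
      apply ser_ex_minus; apply P_ex.
    - apply ser_ex_plus.
      + apply (exR_ext (fun n => scal (eta / 3) (theta ^ S n))). reflexivity.
        apply (@ex_series_scal_l R_AbsRing R_NormedModule). apply ex_geomS; apply th1.
      + apply (exR_ext (fun n => scal ((2/3) ^ N) ((3/4) ^ S n))). reflexivity.
        apply (@ex_series_scal_l R_AbsRing R_NormedModule). apply ex_geomS; lra. }
  rewrite Series_plus in Hser.
  2:{ apply (exR_ext (fun n => scal (eta / 3) (theta ^ S n))). reflexivity.
        apply (@ex_series_scal_l R_AbsRing R_NormedModule). apply ex_geomS; apply th1. }
  2:{ apply (exR_ext (fun n => scal ((2/3) ^ N) ((3/4) ^ S n))). reflexivity.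
        apply (@ex_series_scal_l R_AbsRing R_NormedModule). apply ex_geomS; lra. }
  rewrite !Series_scal_l in Hser. rewrite ser_geomS in Hser by apply th1.
  rewrite ser_geomS in Hser by lra.
  assert (theta / (1 - theta) <= 1).
  { apply Rmult_le_reg_r with (1 - theta). lra. field_simplify; lra. }
  assert (eta / 3 * (theta / (1 - theta)) <= eta / 3) by (pose proof Heta; nra).
  replace (3 / 4 / (1 - 3 / 4)) with 3 in Hser by field.
  unfold eta in *. lra.
Qed.

Lemma quant : quantified cle (p_theta pY a theta).
Proof.
  split. apply P_pm. intros U. split.
  - intros HU. apply (pm_open_of _ P U). intros f Hf. apply nbhdA; auto.
  - intros [I [HI HU]]. split.
    + intros x y Hx Hxy. destruct (proj1 (HU x) Hx) as [c [Hc Hb]]. apply HU. exists c; split; auto.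
      unfold pball in *. pose proof (P_antitone x y (fst c) Hxy). unfold P in H. lra.
    + intros x Hx. destruct (proj1 (HU x) Hx) as [c [Hc Hb]].
      destruct (B2 (fst c) x (snd c) Hb) as [h [Hh Hh']]. exists h; split; auto.
      apply HU. exists c; split; auto.
Qed.
End Main.

Theorem mainTheorem7 (X Y : Type) (leX : X -> X -> Prop) (leY : Y -> Y -> Prop)
  (pX : X -> X -> R) (pY : Y -> Y -> R) (B : X -> Prop) (a : nat -> X) :
  scott_domain leX -> scott_domain leY ->
  quantified leX pX -> quantified leY pY ->
  (forall x x', 0 <= pX x x' <= 1) -> (forall y y', 0 <= pY y y' <= 1) ->
  is_basis leX B -> countable_set B ->
  (forall n, B (a n)) -> (forall b, B b -> exists n, a n = b) ->
  forall theta : R, 0 < theta <= 1 / 2 ->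
  quantified (@cfun_le X Y leX leY) (@p_theta X Y leX leY pY a theta).
Proof.
  intros [[poX dX] [[BX [_ [HBXc HBX]]] _]] [[poY dY] [[BY [_ [HBYc HBY]]] bcY]]
    HqX HqY _ HpY01 HB _ _ Hsurj theta Hth.
  eapply quant; eauto.
Qed.
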